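(* Let $\mu\in(0,1]$ and let $G$, $H$ be two $k$-uniform hypergraphs such that there exists a homomorphism $\psi$ from $G$ to $H$. If $H$ has the $\mu$-fractional property, then so does $G$. In particular, if a $k$-uniform hypergraph has the $\mu$-fractional property, then so do all of its subhypergraphs.
   Context: A homomorphism from $G$ to $H$ is a map $\psi\colon V(G)\to V(H)$ such that $\psi[e]\in E(H)$ for every edge $e\in E(G)$. A $k$-uniform hypergraph $H$ has the $\mu$-fractional property if for every family $(w_i)_{i\in V(H)}$ of nonnegative real numbers there exists an independent set $Z\subseteq V(H)$ (a set containing no edge of $H$) such that $\sum_{i\in Z}w_i\geq\mu\sum_{i\in V(H)}w_i$. *)

(* Defs.v *)
From HB Require Import structures.
From mathcomp Require Import all_boot all_order all_algebra.
From mathcomp Require Import reals.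
Set Implicit Arguments. Unset Strict Implicit. Unset Printing Implicit Defensive.
Import Order.TTheory GRing.Theory Num.Theory.
Local Open Scope ring_scope.

(* A (finite) hypergraph whose vertices live in a finite ambient type T:
   an explicit vertex set and a set of edges (each a set of vertices). *)
Record hypergraph (T : finType) := Hypergraph {
  verts : {set T};
  edges : {set {set T}} }.

Definition uniform (k : nat) (T : finType) (H : hypergraph T) : Prop :=
  forall e, e \in edges H -> e \subset verts H /\ #|e| = k.

Definition independent (T : finType) (H : hypergraph T) (Z : {set T}) : Prop :=
  Z \subset verts H /\ forall e, e \in edges H -> ~~ (e \subset Z).

Definition fractional_property (R : realType) (mu : R) (T : finType)
    (H : hypergraph T) : Prop :=
  forall w : T -> R, (forall i, i \in verts H -> 0 <= w i) ->
    exists Z : {set T}, independent H Z /\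
      mu * (\sum_(i in verts H) w i) <= \sum_(i in Z) w i.

Definition homomorphism (T1 T2 : finType) (G : hypergraph T1) (H : hypergraph T2)
    (psi : T1 -> T2) : Prop :=
  (forall v, v \in verts G -> psi v \in verts H) /\
  (forall e, e \in edges G -> psi @: e \in edges H).

Definition subhypergraph (T : finType) (G H : hypergraph T) : Prop :=
  verts G \subset verts H /\ edges G \subset edges H.

(* Main.v *)
Require Import Defs.
From HB Require Import structures.
From mathcomp Require Import all_boot all_order all_algebra.
From mathcomp Require Import reals.
Import Order.TTheory GRing.Theory Num.Theory.
Local Open Scope ring_scope.

Lemma sum_fiber (R : realType) (T1 T2 : finType) (V : {set T1}) (A : {set T2})
  (psi : T1 -> T2) (w : T1 -> R) :
  \sum_(j in A) \sum_(i in V | psi i == j) w i =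
  \sum_(i in V | psi i \in A) w i.
Proof.
rewrite (partition_big psi (fun j => j \in A)) /=; last by move=> i /andP[].
apply: eq_bigr => j jA; apply: eq_bigl => i.
case: (i \in V) => //=; case: eqP => [->|]; by rewrite ?jA ?andbF.
Qed.

Lemma hom_frac (R : realType) (mu : R) (T1 T2 : finType) (G : hypergraph T1)
  (H : hypergraph T2) (psi : T1 -> T2) :
  homomorphism G H psi -> fractional_property mu H -> fractional_property mu G.
Proof.
move=> [hv he] fH w w0.
have [Z' [[Z'H Z'ind] ineq]] :=
  fH (fun j => \sum_(i in verts G | psi i == j) w i)
     (fun j _ => sumr_ge0 _ (fun i H => w0 i (proj1 (andP H)))).
exists (verts G :&: psi @^-1: Z'); split.
  split; first exact: subsetIl.
  move=> e eG; apply/negP => sub.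
  have /negP := Z'ind _ (he e eG); apply.
  apply/subsetP => y /imsetP[x xe ->].
  by have := subsetP sub x xe; rewrite !inE => /andP[].
move: ineq; rewrite !sum_fiber.
have -> : \sum_(i in verts G | psi i \in verts H) w i = \sum_(i in verts G) w i.
  by apply: eq_bigl => i; case iG: (i \in verts G) => //=; rewrite hv.
have -> : \sum_(i in verts G :&: psi @^-1: Z') w i =
          \sum_(i in verts G | psi i \in Z') w i.
  by apply: eq_bigl => i; rewrite !inE.
done.
Qed.

Theorem lemma3p2 (R : realType) (mu : R) (k : nat) :
  0 < mu <= 1 ->
  (forall (T1 T2 : finType) (G : hypergraph T1) (H : hypergraph T2),
      uniform k G -> uniform k H ->
      (exists psi : T1 -> T2, homomorphism G H psi) ->
      fractional_property mu H -> fractional_property mu G) /\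
  (forall (T : finType) (H G : hypergraph T),
      uniform k H -> subhypergraph G H ->
      fractional_property mu H -> fractional_property mu G).
Proof.
move=> _; split.
  by move=> T1 T2 G H _ _ [psi hpsi]; apply: hom_frac hpsi.
move=> T H G _ [sv se]; apply: (@hom_frac R mu T T G H id); split.
  by move=> v vG; apply: (subsetP sv).
by move=> e eG; rewrite imset_id; apply: (subsetP se).
Qed.
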